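(* Let $(X,d)$ be a complete metric space and let $G:X\times X\to X$ be a mapping such that (a) $G(x,x)=x$ for all $x\in X$, and (b) for $x,y\in X$, $G(x,y)=x$ implies $y=x$. Let $T:X\to P_{cl}(X)$ be a multivalued operator with $SFix(T)\neq\emptyset$ and let $T_G(x)=\{G(x,u):u\in T(x)\}$ be the admissible perturbation of $T$ corresponding to $G$. Suppose there exist $\alpha,\beta,\gamma\ge0$ with $\alpha+\beta+\gamma<1$ such that $$H(T_G(x),T_G(y))\le\alpha d(x,y)+\beta D(x,T_G(y))+\gamma D(y,T_G(x))\quad\text{for all }x,y\in X,$$ so that $SFix(T)=\{x^*\}$ for some $x^*$, and suppose moreover that (ii) there exists $l\in(0,1)$ with $H(T(x),\{x^*\})\le l\,H(T_G(x),\{x^*\})$ for all $x\in X$, and (iii) there exists $L>0$ with $D(x,T_G(x))\le L\,D(x,T(x))$ for all $x\in X$. Then the strict fixed point problem $T(x)=\{x\}$ is well-posed: $T$ has a unique strict fixed point $x^*$, and for every sequence $(u_n)_{n\in\mathbb N}\subset X$ with $D(u_n,T(u_n))\to0$ we have $u_n\to x^*$.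
   Context: $P_{cl}(X)$ is the family of nonempty closed subsets of $X$; $SFix(T)=\{x:T(x)=\{x\}\}$. For nonempty $A,B\subseteq X$: $D(a,B)=\inf_{b\in B}d(a,b)$, $e(A,B)=\sup_{a\in A}D(a,B)$, $H(A,B)=\max\{e(A,B),e(B,A)\}$. *)

(* Defs.v *)
From HB Require Import structures.
From mathcomp Require Import all_boot all_order all_algebra.
From mathcomp Require Import all_classical all_reals all_analysis.
Set Implicit Arguments. Unset Strict Implicit. Unset Printing Implicit Defensive.
Import Order.TTheory GRing.Theory Num.Theory.
Import numFieldNormedType.Exports.
Local Open Scope classical_set_scope.
Local Open Scope ring_scope.

Section Defs.
Variables (R : realType) (X : Type) (d : X -> X -> R).

Definition is_metric : Prop :=
  (forall x y, 0 <= d x y) /\ (forall x y, d x y = 0 <-> x = y) /\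
  (forall x y, d x y = d y x) /\ (forall x y z, d x z <= d x y + d y z).

Definition mconverges (u : nat -> X) (x : X) : Prop :=
  (fun n => d (u n) x) @ \oo --> (0 : R).

Definition mcauchy (u : nat -> X) : Prop :=
  forall e : R, 0 < e -> exists N : nat, forall m n : nat,
    (N <= m)%N -> (N <= n)%N -> d (u m) (u n) < e.

Definition mcomplete : Prop :=
  forall u : nat -> X, mcauchy u -> exists x, mconverges u x.

Definition mclosed (A : set X) : Prop :=
  forall (u : nat -> X) (x : X), (forall n, A (u n)) -> mconverges u x -> A x.

Definition Pcl (A : set X) : Prop := A !=set0 /\ mclosed A.

Definition Dist (a : X) (B : set X) : \bar R :=
  ereal_inf [set (d a b)%:E | b in B].

Definition excess (A B : set X) : \bar R :=
  ereal_sup [set Dist a B | a in A].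

Definition Hpom (A B : set X) : \bar R := maxe (excess A B) (excess B A).

End Defs.

Definition SFix (X : Type) (T : X -> set X) : set X := [set x | T x = [set x]].

Definition TG (X : Type) (G : X -> X -> X) (T : X -> set X) (x : X) : set X :=
  [set G x u | u in T x].

(* Main.v *)
Require Import Defs.
From HB Require Import structures.
From mathcomp Require Import all_boot all_order all_algebra.
From mathcomp Require Import all_classical all_reals all_analysis.
From mathcomp Require Import lra.
Set Implicit Arguments.
Import Order.TTheory GRing.Theory Num.Theory.
Import numFieldNormedType.Exports.
Local Open Scope classical_set_scope.
Local Open Scope ring_scope.

Section Helpers.
Variables (R : realType) (X : Type) (d : X -> X -> R).
Hypothesis hm : is_metric d.

Lemma Dist_lb a (B : set X) r : (forall b, B b -> r <= d a b) -> (r%:E <= Dist d a B)%E.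
Proof.
move=> h; apply: le_ereal_inf_tmp => _ [b Bb <-]; rewrite lee_fin; exact: h.
Qed.

Lemma Dist_ub a (B : set X) b : B b -> (Dist d a B <= (d a b)%:E)%E.
Proof. by move=> Bb; apply: ereal_inf_lbound; exists b. Qed.

Lemma Dist_fin a (B : set X) : B !=set0 -> Dist d a B = (fine (Dist d a B))%:E.
Proof.
case=> b Bb.
have h1 := @Dist_ub a B b Bb.
have h0 : (0%:E <= Dist d a B)%E by apply: Dist_lb => c _; case: hm => ->.
move: h1 h0; case: (Dist d a B) => //.
Qed.

Lemma Dist_real_lb a (B : set X) r : B !=set0 -> (forall b, B b -> r <= d a b) ->
  r <= fine (Dist d a B).
Proof.
move=> ne h; have := @Dist_lb a B r h; by rewrite (@Dist_fin a B ne) lee_fin.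
Qed.

Lemma Dist_real_ub a (B : set X) b : B b -> fine (Dist d a B) <= d a b.
Proof.
move=> Bb; have := @Dist_ub a B b Bb; rewrite (@Dist_fin a B (ex_intro _ b Bb)) lee_fin //.
Qed.

Lemma Dist_tri a c (B : set X) : B !=set0 ->
  fine (Dist d a B) <= d a c + fine (Dist d c B).
Proof.
move=> ne.
have : fine (Dist d a B) - d a c <= fine (Dist d c B).
  apply: Dist_real_lb => // b Bb.
  have := @Dist_real_ub a B b Bb.
  case: hm => _ [_ [_ tri]]; have := tri a c b; lra.
lra.
Qed.

Lemma Dist_set1 a p : Dist d a [set p] = (d a p)%:E.
Proof. by rewrite /Dist image_set1 ereal_inf1. Qed.

Lemma Hpom_lb (A : set X) p a : A a -> ((d a p)%:E <= Hpom d A [set p])%E.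
Proof.
move=> Aa; rewrite /Hpom le_max; apply/orP; left.
apply: ereal_sup_ubound; exists a => //; exact: Dist_set1.
Qed.

End Helpers.

Lemma TG_set1 (X : Type) (G : X -> X -> X) (T : X -> set X) y :
  (forall x, G x x = x) -> T y = [set y] -> TG G T y = [set y].
Proof. by move=> hG hT; rewrite /TG hT image_set1 hG. Qed.

Theorem mainTheorem6 (R : realType) (X : Type) (d : X -> X -> R)
  (G : X -> X -> X) (T : X -> set X) (xs : X)
  (alpha beta gamma l L : R) :
  is_metric d -> mcomplete d ->
  (forall x, G x x = x) ->
  (forall x y, G x y = x -> y = x) ->
  (forall x, Pcl d (T x)) ->
  SFix T xs ->
  0 <= alpha -> 0 <= beta -> 0 <= gamma -> alpha + beta + gamma < 1 ->
  (forall x y, (Hpom d (TG G T x) (TG G T y)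
     <= (alpha * d x y)%:E + beta%:E * Dist d x (TG G T y)
        + gamma%:E * Dist d y (TG G T x))%E) ->
  0 < l -> l < 1 ->
  (forall x, (Hpom d (T x) [set xs] <= l%:E * Hpom d (TG G T x) [set xs])%E) ->
  0 < L ->
  (forall x, (Dist d x (TG G T x) <= L%:E * Dist d x (T x))%E) ->
  SFix T = [set xs] /\
  (forall u : nat -> X,
     (fun n => Dist d (u n) (T (u n))) @ \oo --> (0 : \bar R)%E ->
     mconverges d u xs).
Proof.
move=> hm _ hG _ hcl hxs ha hb hc hs hH hl0 hl1 hii hL0 hiii.
have [hd0 [hd1 [hsym htri]]] := hm.
have TGxs : TG G T xs = [set xs] by exact: TG_set1.
split.
  apply/seteqP; split => y; last by move=> ->.
  move=> hy; have TGy : TG G T y = [set y] by exact: TG_set1.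
  have := hH y xs; rewrite TGy TGxs !Dist_set1.
  move=> h; have := le_trans (@Hpom_lb R X d [set y] xs y (erefl y)) h.
  rewrite -!EFinM -!EFinD lee_fin hsym => h2.
  have h3 := hd0 xs y.
  have : d xs y = 0.
    have : (1 - (alpha + beta + gamma)) * d xs y <= 0 by nra.
    move=> h4; apply/eqP; rewrite eq_le h3 andbT.
    have hpos : 0 < 1 - (alpha + beta + gamma) by lra.
    by rewrite -(pmulr_rle0 _ hpos).
  by move/(hd1 xs y) => ->.
have key : forall x, (1 - l * (alpha + beta + gamma)) * d x xs <=
    (1 + l * gamma * L) * fine (Dist d x (T x)).
  move=> x.
  have neT : T x !=set0 by case: (hcl x).
  have neTG : TG G T x !=set0 by case: neT => t Tt; exists (G x t), t.
  set D0 := fine (Dist d x (T x)).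
  set DG := fine (Dist d x (TG G T x)).
  set D1 := fine (Dist d xs (TG G T x)).
  have hDG : DG <= L * D0.
    have := hiii x; rewrite (@Dist_fin R X d hm x _ neT) (@Dist_fin R X d hm x _ neTG).
    by rewrite -EFinM lee_fin.
  have hD1 : D1 <= d xs x + DG by exact: Dist_tri.
  have hHx : (Hpom d (TG G T x) [set xs] <=
      (alpha * d x xs + beta * d x xs + gamma * D1)%:E)%E.
    have := hH x xs; rewrite TGxs Dist_set1 (@Dist_fin R X d hm xs _ neTG).
    by rewrite -!EFinM -!EFinD.
  set r := alpha * d x xs + beta * d x xs + gamma * D1.
  have ht : forall t, T x t -> d t xs <= l * r.
    move=> t Tt.
    have h1 := @Hpom_lb R X d (T x) xs t Tt.
    have h2 := le_trans h1 (hii x).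
    have h3 : (l%:E * Hpom d (TG G T x) [set xs] <= l%:E * r%:E)%E.
      by apply: lee_wpmul2l => //; rewrite lee_fin ltW.
    by have := le_trans h2 h3; rewrite -EFinM lee_fin.
  have hd : d x xs - l * r <= D0.
    apply: Dist_real_lb => // t Tt.
    have := ht t Tt; have := htri x t xs; lra.
  have hlg : 0 <= l * gamma by apply: mulr_ge0 => //; exact: ltW.
  have e1 := ler_wpM2l hlg (le_trans hD1 (lerD (lexx _) hDG)).
  rewrite /r in hd; rewrite hsym in e1.
  nra.
move=> u /fine_cvgP [_ hf].
rewrite /mconverges; apply/cvgrPdist_lt => eps heps.
have hls : l * (alpha + beta + gamma) < 1.
  have : 0 <= alpha + beta + gamma by lra.
  nra.
have hcc : 0 < 1 - l * (alpha + beta + gamma) by lra.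
have hK : 0 < 1 + l * gamma * L.
  have : 0 <= l * gamma * L.
    by apply: mulr_ge0 => //; [apply: mulr_ge0 => //; exact: ltW | exact: ltW].
  lra.
have he : 0 < eps * (1 - l * (alpha + beta + gamma)) / (1 + l * gamma * L).
  by apply: divr_gt0 => //; exact: mulr_gt0.
move/cvgrPdist_lt: hf => /(_ _ he) hnear.
apply: filterS hnear => n /=.
rewrite !sub0r !normrN (ger0_norm (hd0 (u n) xs)).
rewrite ltr_pdivlMr // => h.
have h1 := key (u n).
have h2 := ler_norm (fine (Dist d (u n) (T (u n)))).
have h3 := hd0 (u n) xs.
nra.
Qed.
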